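(* Let $M,N$ be integers, let $m_0$ be a trigonometric polynomial with $m_0(0)=1$, let $C\in\mathbb{R}$, and let $$\widehat\phi(\xi)=C\prod_{j=0}^{\infty}m_0\Big(\frac{\xi}{p^{N-j}}\Big),\qquad \xi\in\mathbb{Q}_p .$$ If $\operatorname{supp}\widehat\phi\subset B_M(0)$, then there exist at most $\frac{\deg m_0}{p-1}$ integers $n$ such that $0\le n<p^{M+N}$ and $\widehat\phi\big(\frac{n}{p^M}\big)\ne0$.
   Context: $p$ is a prime, $\mathbb{Q}_p$ the field of $p$-adic numbers with norm $|\cdot|_p$; $B_M(0)=\{\xi:|\xi|_p\le p^M\}$. The fractional part of $x=p^{\gamma}\sum_{j\ge0}x_jp^j$ ($x_j\in\{0,\dots,p-1\}$, $x_0\ne0$) is $\{x\}_p=p^{\gamma}\sum_{j=0}^{-\gamma-1}x_jp^j$, $\{0\}_p=0$, and $\chi_p(x)=e^{2\pi i\{x\}_p}$. A trigonometric polynomial is a function $m(\xi)=\sum_{k=0}^{K}c_k\chi_p(k\xi)$ with $c_k\in\mathbb{C}$; its degree $\deg m$ is the largest $k$ with $c_k\ne0$. *)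

(* Defs.v *)
From Stdlib Require Import Reals ZArith Znumtheory List.
From Coquelicot Require Import Coquelicot.
Open Scope R_scope.

(* An element of Q_p represented as  xi = p^e * sum_{i>=0} a_i p^i  with
   digits a_i in {0,...,p-1}.  Every element of Q_p has such representations
   (the paper's normalized one x_0 <> 0 is one of them); all notions below
   are invariant under the choice of representation. *)
Record Qp (p : nat) := QP { qexp : Z; qdig : nat -> nat;
                            qdig_lt : forall i, (qdig i < p)%nat }.
Arguments QP {p}. Arguments qexp {p}. Arguments qdig {p}. Arguments qdig_lt {p}.

Definition Qp_zero (p : nat) (Hp : (0 < p)%nat) : Qp p :=
  QP 0%Z (fun _ => 0%nat) (fun _ => Hp).

Definition Qp_divpow {p} (xi : Qp p) (s : Z) : Qp p :=
  QP (qexp xi - s)%Z (qdig xi) (qdig_lt xi).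

Fixpoint digsum (p : nat) (a : nat -> nat) (n : nat) : nat :=
  match n with O => O | S n' => (digsum p a n' + a n' * p ^ n')%nat end.

(* k * xi for a natural number k: digit i of k * sum a_j p^j only depends on
   the first i+1 digits. *)
Lemma Qp_mulnat_lt p (xi : Qp p) (k : nat) :
  forall i, ((k * digsum p (qdig xi) (S i) / p ^ i) mod p < p)%nat.
Proof.
  intro i. apply Nat.mod_upper_bound.
  pose proof (qdig_lt xi 0). intro Hz; rewrite Hz in H; inversion H.
Qed.
Definition Qp_mulnat {p} (k : nat) (xi : Qp p) : Qp p :=
  QP (qexp xi) (fun i => (k * digsum p (qdig xi) (S i) / p ^ i) mod p)%nat
     (Qp_mulnat_lt p xi k).

(* n / p^M for an integer n >= 0 (base-p digits of n) *)
Lemma Qp_of_lt p (Hp : (0 < p)%nat) (n : Z) :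
  forall i, ((Z.to_nat n / p ^ i) mod p < p)%nat.
Proof. intro i. apply Nat.mod_upper_bound. intro H; subst; inversion Hp. Qed.
Definition Qp_of_frac (p : nat) (Hp : (0 < p)%nat) (n M : Z) : Qp p :=
  QP (- M)%Z (fun i => (Z.to_nat n / p ^ i) mod p)%nat (Qp_of_lt p Hp n).

Fixpoint Rsum_lt (f : nat -> R) (n : nat) : R :=
  match n with O => 0 | S n' => Rsum_lt f n' + f n' end.

Definition frac_p {p} (xi : Qp p) : R :=
  Rsum_lt (fun j => INR (qdig xi j) * powerRZ (INR p) (qexp xi + Z.of_nat j))
          (Z.to_nat (- qexp xi)).

Definition chi_p {p} (xi : Qp p) : C :=
  (cos (2 * PI * frac_p xi), sin (2 * PI * frac_p xi)).

(* |xi|_p <= p^M *)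
Definition in_ball {p} (M : Z) (xi : Qp p) : Prop :=
  forall i, qdig xi i <> 0%nat -> (- M <= qexp xi + Z.of_nat i)%Z.

Fixpoint Csum_n (f : nat -> C) (n : nat) : C :=
  match n with O => f O | S n' => Cplus (Csum_n f n') (f n) end.
Fixpoint Cprod_lt (f : nat -> C) (n : nat) : C :=
  match n with O => RtoC 1 | S n' => Cmult (Cprod_lt f n') (f n') end.

Definition trig_poly {p} (c : nat -> C) (K : nat) (xi : Qp p) : C :=
  Csum_n (fun k => Cmult (c k) (chi_p (Qp_mulnat k xi))) K.

Definition is_deg (c : nat -> C) (K d : nat) : Prop :=
  (d <= K)%nat /\ c d <> RtoC 0 /\ forall k, (d < k <= K)%nat -> c k = RtoC 0.

(* Main.v *)
Require Import Defs.
From Stdlib Require Import Reals ZArith Znumtheory List Lia Lra Psatz ClassicalEpsilon.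
From Coquelicot Require Import Coquelicot.
Open Scope R_scope.

Fixpoint ev (l : list C) (z : C) : C :=
  match l with nil => RtoC 0 | a :: l' => Cplus a (Cmult z (ev l' z)) end.

Fixpoint pdiv (l : list C) (z0 : C) : list C :=
  match l with nil => nil | a :: l' =>
    match l' with nil => nil | _ => ev l' z0 :: pdiv l' z0 end end.

Lemma pdiv_spec l z0 z :
  Cminus (ev l z) (ev l z0) = Cmult (Cminus z z0) (ev (pdiv l z0) z).
Proof.
  induction l as [|a l IH]; simpl.
  - ring.
  - destruct l as [|b l'].
    + simpl. ring.
    + change (pdiv (a :: b :: l') z0) with (ev (b :: l') z0 :: pdiv (b :: l') z0).
      change (ev (ev (b :: l') z0 :: pdiv (b :: l') z0) z) with
        (Cplus (ev (b :: l') z0) (Cmult z (ev (pdiv (b :: l') z0) z))).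
      set (A := ev (b :: l') z) in *. set (B := ev (b :: l') z0) in *.
      set (D := ev (pdiv (b :: l') z0) z) in *.
      assert (HA : A = Cplus B (Cmult (Cminus z z0) D)) by (rewrite <- IH; ring).
      rewrite HA. ring.
Qed.

Lemma pdiv_len l z0 : length (pdiv l z0) = pred (length l).
Proof.
  induction l as [|a l IH]; simpl; auto.
  destruct l as [|b l']; simpl in *; auto.
Qed.

Lemma pdiv_last l z0 : (2 <= length l)%nat -> last (pdiv l z0) (RtoC 0) = last l (RtoC 0).
Proof.
  induction l as [|a l IH]; simpl; intros H; [lia|].
  destruct l as [|b l']; simpl in H; [lia|].
  destruct l' as [|e l''].
  - simpl. ring.
  - change (last (ev (b :: e :: l'') z0 :: pdiv (b :: e :: l'') z0) 0 =
            last (b :: e :: l'') 0).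
    rewrite <- IH by (simpl; lia).
    change (pdiv (b :: e :: l'') z0) with (ev (e :: l'') z0 :: pdiv (e :: l'') z0).
    reflexivity.
Qed.

Lemma root_bound : forall rs l, NoDup rs -> last l (RtoC 0) <> RtoC 0 ->
  (forall z, In z rs -> ev l z = RtoC 0) -> (length rs < length l)%nat.
Proof.
  induction rs as [|z0 rs IH]; intros l Hnd Hl Hr.
  - destruct l; simpl in *; [congruence| lia].
  - destruct l as [|a l']; [simpl in Hl; congruence|].
    destruct l' as [|b l''].
    + exfalso. apply Hl. simpl. specialize (Hr z0 (or_introl eq_refl)).
      simpl in Hr. rewrite <- Hr. ring.
    + inversion Hnd; subst.
      assert (Hlen : (length rs < length (pdiv (a :: b :: l'') z0))%nat).
      { apply IH; auto.
        - rewrite pdiv_last by (simpl; lia). exact Hl.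
        - intros z Hz.
          pose proof (pdiv_spec (a :: b :: l'') z0 z) as E.
          rewrite (Hr z (or_intror Hz)), (Hr z0 (or_introl eq_refl)) in E.
          assert (Hne : Cminus z z0 <> RtoC 0).
          { intro H0. apply H1. assert (z = z0).
            { transitivity (Cplus (Cminus z z0) z0). ring. rewrite H0. ring. }
            subst; auto. }
          destruct (Ceq_dec (ev (pdiv (a :: b :: l'') z0) z) 0) as [e|e]; auto.
          exfalso. apply (Cmult_neq_0 _ _ Hne e). rewrite <- E. ring. }
      rewrite pdiv_len in Hlen. simpl in *. lia.
Qed.

Lemma ev_app l a z : ev (l ++ a :: nil) z = Cplus (ev l z) (Cmult a (Cpow z (length l))).
Proof.
  induction l as [|b l IH]; simpl.
  - ring.
  - rewrite IH. ring.
Qed.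

Lemma Csum_ev (c : nat -> C) z n :
  Csum_n (fun k => Cmult (c k) (Cpow z k)) n = ev (map c (seq 0 (S n))) z.
Proof.
  induction n as [|n IH].
  - simpl. ring.
  - simpl Csum_n. rewrite IH. rewrite (seq_S (S n)), map_app.
    cbn [map]. rewrite ev_app, length_map, length_seq. reflexivity.
Qed.

Lemma Csum_trim (f : nat -> C) d m :
  (forall k, (d < k <= d + m)%nat -> f k = RtoC 0) -> Csum_n f (d + m) = Csum_n f d.
Proof.
  induction m as [|m IH]; intros H.
  - rewrite Nat.add_0_r; auto.
  - rewrite Nat.add_succ_r. simpl Csum_n. rewrite IH by (intros; apply H; lia).
    rewrite (H (S (d + m))) by lia. ring.
Qed.

Lemma digit_mod p A i : (0 < p)%nat -> ((A / p ^ i) mod p = (A mod p ^ S i) / p ^ i)%nat.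
Proof.
  intros Hp. assert (Hpi : (p ^ i <> 0)%nat) by (apply Nat.pow_nonzero; lia).
  rewrite Nat.pow_succ_r', Nat.mul_comm, Nat.Div0.mod_mul_r.
  rewrite Nat.add_comm, Nat.mul_comm, Nat.div_add_l by exact Hpi.
  rewrite (Nat.div_small (A mod p ^ i)) by (apply Nat.mod_upper_bound; exact Hpi). lia.
Qed.

Lemma digsum_digits p X m : (0 < p)%nat ->
  digsum p (fun i => (X / p ^ i) mod p)%nat m = (X mod p ^ m)%nat.
Proof.
  intros Hp. induction m as [|m IH]; simpl digsum.
  - cbn [digsum]. rewrite Nat.pow_0_r, Nat.mod_1_r. reflexivity.
  - rewrite IH. rewrite Nat.pow_succ_r', (Nat.mul_comm p), Nat.Div0.mod_mul_r. lia.
Qed.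

Lemma digsum_ext p a b m : (forall i, a i = b i) -> digsum p a m = digsum p b m.
Proof. intros H; induction m; simpl; auto; rewrite IHm, H; auto. Qed.

Lemma mulnat_digits p (xi : Qp p) X k : (0 < p)%nat ->
  (forall i, qdig xi i = (X / p ^ i) mod p)%nat ->
  forall i, qdig (Qp_mulnat k xi) i = (((k * X) / p ^ i) mod p)%nat.
Proof.
  intros Hp Hd i.
  change (qdig (Qp_mulnat k xi) i) with ((k * digsum p (qdig xi) (S i) / p ^ i) mod p)%nat.
  rewrite (digsum_ext p (qdig xi) (fun i => (X / p ^ i) mod p)%nat) by exact Hd.
  rewrite digsum_digits by exact Hp.
  rewrite !(digit_mod p _ i Hp).  rewrite Nat.Div0.mul_mod_idemp_r. reflexivity.
Qed.

Lemma frac_digits p (xi : Qp p) X : (1 < p)%nat ->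
  (forall i, qdig xi i = (X / p ^ i) mod p)%nat ->
  frac_p xi = INR (X mod p ^ Z.to_nat (- qexp xi)) / INR (p ^ Z.to_nat (- qexp xi)).
Proof.
  intros Hp Hd. unfold frac_p.
  assert (HpR : INR p <> 0) by (apply not_0_INR; lia).
  assert (Gen : forall m, Rsum_lt (fun j => INR (qdig xi j) * powerRZ (INR p) (qexp xi + Z.of_nat j)) m
     = INR (X mod p ^ m) * powerRZ (INR p) (qexp xi)).
  { induction m as [|m IH]; simpl Rsum_lt.
    - cbn [Rsum_lt]. rewrite Nat.pow_0_r, Nat.mod_1_r. simpl. ring.
    - rewrite IH, powerRZ_add by exact HpR. rewrite <- pow_powerRZ.
      rewrite Hd. rewrite Nat.pow_succ_r', (Nat.mul_comm p), Nat.Div0.mod_mul_r.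
      rewrite plus_INR, mult_INR, pow_INR. ring. }
  rewrite Gen. destruct (Z_le_gt_dec 0 (qexp xi)) as [H|H].
  - replace (Z.to_nat (- qexp xi)) with 0%nat by lia. cbn [Rsum_lt]. rewrite Nat.pow_0_r.
    rewrite Nat.mod_1_r. simpl. field.
  - set (E := Z.to_nat (- qexp xi)).
    assert (He : qexp xi = (- Z.of_nat E)%Z) by (unfold E; lia).
    rewrite He. rewrite powerRZ_neg', <- pow_powerRZ, pow_INR. unfold Rdiv. reflexivity.
Qed.

Definition om (p X E : nat) : C :=
  (cos (2 * PI * INR X / INR (p ^ E)), sin (2 * PI * INR X / INR (p ^ E))).

Lemma om_mod p X E : (0 < p)%nat -> om p X E = om p (X mod p ^ E) E.
Proof.
  intros Hp. assert (Hpi : (p ^ E <> 0)%nat) by (apply Nat.pow_nonzero; lia).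
  assert (HR : INR (p ^ E) <> 0) by (apply not_0_INR; exact Hpi).
  unfold om. rewrite (Nat.div_mod X (p ^ E) Hpi) at 1 2.
  set (q := (X / p ^ E)%nat). set (r := (X mod p ^ E)%nat).
  replace (2 * PI * INR (p ^ E * q + r) / INR (p ^ E)) with
    (2 * PI * INR r / INR (p ^ E) + 2 * INR q * PI).
  - rewrite cos_period, sin_period. reflexivity.
  - rewrite plus_INR, mult_INR. field. exact HR.
Qed.

Lemma om_pow p X E k : Cpow (om p X E) k = om p (k * X) E.
Proof.
  induction k as [|k IH]; simpl Cpow.
  - unfold om. simpl. unfold Rdiv. rewrite Rmult_0_r, Rmult_0_l, cos_0, sin_0. reflexivity.
  - rewrite IH. unfold om, Cmult. simpl fst; simpl snd.
    replace (2 * PI * INR (S k * X) / INR (p ^ E)) with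
      (2 * PI * INR X / INR (p ^ E) + 2 * PI * INR (k * X) / INR (p ^ E)).
    + rewrite cos_plus, sin_plus. f_equal; ring.
    + rewrite !mult_INR, S_INR. unfold Rdiv. ring.
Qed.

Lemma om_mul p X E : (0 < p)%nat -> om p (p * X) (S E) = om p X E.
Proof.
  intros Hp. unfold om.
  assert (HR : INR (p ^ E) <> 0) by (apply not_0_INR, Nat.pow_nonzero; lia).
  assert (HR' : INR p <> 0) by (apply not_0_INR; lia).
  replace (2 * PI * INR (p * X) / INR (p ^ S E)) with (2 * PI * INR X / INR (p ^ E)).
  - reflexivity.
  - rewrite Nat.pow_succ_r', !mult_INR. field. split; assumption.
Qed.

Lemma om_0 p X : (0 < p)%nat -> om p X 0 = RtoC 1.
Proof.
  intros Hp. rewrite (om_mod p X 0 Hp). rewrite Nat.pow_0_r, Nat.mod_1_r.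
  unfold om. simpl. unfold Rdiv. rewrite Rmult_0_r, Rmult_0_l, cos_0, sin_0. reflexivity.
Qed.

Lemma chi_digits p (xi : Qp p) X k : (1 < p)%nat ->
  (forall i, qdig xi i = (X / p ^ i) mod p)%nat ->
  chi_p (Qp_mulnat k xi) = Cpow (om p X (Z.to_nat (- qexp xi))) k.
Proof.
  intros Hp Hd. rewrite om_pow.
  rewrite (om_mod p (k * X)) by lia.
  unfold chi_p. rewrite (frac_digits p (Qp_mulnat k xi) (k * X) Hp).
  - unfold om. simpl qexp. unfold Rdiv. rewrite !Rmult_assoc. reflexivity.
  - apply mulnat_digits; auto. lia.
Qed.

Lemma Csum_ext f g n : (forall k, f k = g k) -> Csum_n f n = Csum_n g n.
Proof. intros H; induction n; simpl; rewrite ?IHn, ?H; auto. Qed.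

Lemma trig_digits p (xi : Qp p) X c K d : (1 < p)%nat -> is_deg c K d ->
  (forall i, qdig xi i = (X / p ^ i) mod p)%nat ->
  trig_poly c K xi = ev (map c (seq 0 (S d))) (om p X (Z.to_nat (- qexp xi))).
Proof.
  intros Hp [HdK [Hcd Hc]] Hd. unfold trig_poly.
  rewrite (Csum_ext _ (fun k => Cmult (c k) (Cpow (om p X (Z.to_nat (- qexp xi))) k))).
  2:{ intros k. rewrite (chi_digits p xi X k Hp Hd). reflexivity. }
  replace K with (d + (K - d))%nat by lia.
  rewrite Csum_trim.
  - apply Csum_ev.
  - intros k Hk. rewrite Hc by lia. ring.
Qed.

Lemma trig_noninj a b : 0 <= a -> a < b -> b < 2 * PI -> cos a = cos b -> sin a = sin b -> False.
Proof.
  intros H0 H1 H2 Hc Hs.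
  assert (Hsx : sin (b - a) = 0) by (rewrite sin_minus, <- Hc, <- Hs; ring).
  assert (Hcx : cos (b - a) = 1).
  { rewrite cos_minus, <- Hc, <- Hs. pose proof (sin2_cos2 a). unfold Rsqr in H. lra. }
  destruct (sin_eq_O_2PI_0 (b - a)) as [E|[E|E]]; try lra.
  rewrite E, cos_PI in Hcx. lra.
Qed.

Lemma om_inj p X Y E : (0 < p)%nat -> (X < p ^ E)%nat -> (Y < p ^ E)%nat ->
  om p X E = om p Y E -> X = Y.
Proof.
  intros Hp HX HY Heq. unfold om in Heq. injection Heq as Hc Hs.
  assert (HP : 0 < INR (p ^ E)) by (apply lt_0_INR; lia).
  assert (Hang : forall Z, (Z < p ^ E)%nat -> 0 <= 2 * PI * INR Z / INR (p ^ E) < 2 * PI).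
  { intros Z HZ. pose proof PI_RGT_0. apply lt_INR in HZ. pose proof (pos_INR Z).
    split.
    - apply Rmult_le_pos; [|left; apply Rinv_0_lt_compat; lra]. nra.
    - apply (Rmult_lt_reg_r (INR (p ^ E))); auto. unfold Rdiv. rewrite Rmult_assoc, Rinv_l by lra.
      nra. }
  destruct (lt_eq_lt_dec X Y) as [[H|H]|H]; auto; exfalso.
  - apply (trig_noninj (2 * PI * INR X / INR (p ^ E)) (2 * PI * INR Y / INR (p ^ E))); auto.
    + apply Hang; auto.
    + apply lt_INR in H. pose proof PI_RGT_0. unfold Rdiv. apply Rmult_lt_compat_r.
      apply Rinv_0_lt_compat; lra. nra.
    + apply Hang; auto.
  - apply (trig_noninj (2 * PI * INR Y / INR (p ^ E)) (2 * PI * INR X / INR (p ^ E))); auto.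
    + apply Hang; auto.
    + apply lt_INR in H. pose proof PI_RGT_0. unfold Rdiv. apply Rmult_lt_compat_r.
      apply Rinv_0_lt_compat; lra. nra.
    + apply Hang; auto.
Qed.


Fixpoint cnt (f : nat -> bool) (n : nat) : nat :=
  match n with O => O | S n' => (cnt f n' + if f n' then 1 else 0)%nat end.

Lemma cnt_ext f g n : (forall i, (i < n)%nat -> f i = g i) -> cnt f n = cnt g n.
Proof. induction n; intros H; simpl; auto. rewrite IHn by (intros; apply H; lia). rewrite H by lia. auto. Qed.

Lemma cnt_add f a b : cnt f (a + b) = (cnt f a + cnt (fun i => f (a + i)%nat) b)%nat.
Proof. induction b; simpl; [rewrite Nat.add_0_r; lia|]. rewrite Nat.add_succ_r. simpl. rewrite IHb. lia. Qed.

Lemma cnt_false f n : (forall i, (i < n)%nat -> f i = false) -> cnt f n = 0%nat.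
Proof. induction n; intros H; simpl; auto. rewrite IHn by (intros; apply H; lia). rewrite H by lia. auto. Qed.

Lemma cnt_le3 f g h n : (forall i, f i = true -> g i = true \/ h i = true) ->
  (cnt f n <= cnt g n + cnt h n)%nat.
Proof.
  intros H. induction n; simpl; auto.
  specialize (H n). destruct (f n), (g n), (h n); try lia.
Qed.

Lemma cnt_first f q : cnt f (S q) = ((if f 0 then 1 else 0) + cnt (fun i => f (S i)) q)%nat.
Proof. exact (cnt_add f 1 q). Qed.

Lemma cnt_mod g P k : (0 < P)%nat -> cnt (fun r => g (r mod P)%nat) (k * P) = (k * cnt g P)%nat.
Proof.
  intros HP. induction k; simpl; auto.
  rewrite Nat.add_comm, cnt_add, IHk.
  rewrite (cnt_ext (fun i => g ((k * P + i) mod P)%nat) g P). lia.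
  intros i Hi. rewrite Nat.add_comm, Nat.Div0.mod_add, Nat.mod_small by lia. reflexivity.
Qed.

Lemma cnt_div g p t : (0 < p)%nat ->
  cnt (fun r => andb (Nat.eqb (r mod p) 0) (g (r / p)%nat)) (t * p) = cnt g t.
Proof.
  intros Hp. induction t; simpl; auto.
  rewrite Nat.add_comm, cnt_add, IHt.
  f_equal. destruct p as [|q]; [lia|].
  rewrite cnt_first. rewrite cnt_false.
    rewrite !Nat.add_0_r, Nat.Div0.mod_mul, Nat.div_mul by lia. simpl.
    destruct (g t); lia.
  - intros i Hi. replace (t * S q + S i)%nat with ((1 + i) + t * S q)%nat by lia.
    rewrite Nat.Div0.mod_add, Nat.mod_small by lia. simpl. reflexivity.
Qed.

Lemma cnt_filter f n : length (filter f (seq 0 n)) = cnt f n.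
Proof.
  induction n; auto. rewrite seq_S, filter_app, length_app, IHn. simpl.
  destruct (f n); simpl; lia.
Qed.

Lemma lim_unique (u : nat -> C) a b :
  filterlim u eventually (locally a) -> filterlim u eventually (locally b) -> a = b.
Proof.
  intros Ha Hb.
  assert (PF : ProperFilter' (@eventually)) by (apply Proper_StrongProper, eventually_filter).
  exact (@filterlim_locally_unique nat R_AbsRing C_R_NormedModule eventually PF u a b Ha Hb).
Qed.

Lemma lim_shift (u : nat -> C) a :
  filterlim u eventually (locally a) -> filterlim (fun n => u (S n)) eventually (locally a).
Proof.
  intros H. apply (filterlim_comp _ _ _ S u eventually eventually); auto.
  intros P [N HN]. exists N. intros n Hn. apply HN. lia.
Qed.

Lemma lim_scal (u : nat -> C) a g :
  filterlim u eventually (locally a) -> filterlim (fun n => Cmult g (u n)) eventually (locally (Cmult g a)).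
Proof.
  intros H. apply (filterlim_comp _ _ _ u (fun z => Cmult g z) eventually (locally a)); auto.
  apply (filterlim_scal_r (K := C_AbsRing) (V := C_NormedModule) g a).
Qed.

Lemma Cprod_shift f n : Cprod_lt f (S n) = Cmult (f O) (Cprod_lt (fun j => f (S j)) n).
Proof.
  induction n; simpl in *.
  - ring.
  - rewrite IHn. ring.
Qed.

Lemma modpow_le p X Y E E' : (E' <= E)%nat ->
  (X mod p ^ E = Y mod p ^ E)%nat -> (X mod p ^ E' = Y mod p ^ E')%nat.
Proof.
  intros HE H. replace E with (E' + (E - E'))%nat in H by lia.
  rewrite Nat.pow_add_r, !Nat.Div0.mod_mul_r in H.
  assert (Hr : forall a b c, ((a mod b + b * c) mod b = a mod b)%nat).
  { intros. rewrite Nat.mul_comm, Nat.Div0.mod_add, Nat.Div0.mod_mod. reflexivity. }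
  rewrite <- (Hr X _ ((X / p ^ E') mod p ^ (E - E'))%nat), H, Hr. reflexivity.
Qed.

Lemma NoDup_map_in {A B} (f : A -> B) l :
  (forall x y, In x l -> In y l -> f x = f y -> x = y) -> NoDup l -> NoDup (map f l).
Proof.
  induction l as [|a l IH]; intros Hi Hn; simpl; constructor.
  - intro Hin. apply in_map_iff in Hin as [x [Hx Hxl]].
    inversion Hn; subst. assert (x = a) by (apply Hi; simpl; auto). subst; auto.
  - inversion Hn; subst. apply IH; auto. intros; apply Hi; simpl; auto.
Qed.

Lemma Cprod_ext f g n : (forall j, f j = g j) -> Cprod_lt f n = Cprod_lt g n.
Proof. intros H; induction n; simpl; rewrite ?IHn, ?H; auto. Qed.

Theorem lemma1 (p : nat) (Hp : prime (Z.of_nat p)) (Hp0 : (0 < p)%nat)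
  (M N : Z) (c : nat -> C) (K d : nat) (Cst : R) (phi : Qp p -> C) :
  is_deg c K d ->
  trig_poly c K (Qp_zero p Hp0) = RtoC 1 ->
  (forall xi : Qp p,
     filterlim
       (fun n => Cmult (RtoC Cst)
          (Cprod_lt (fun j => trig_poly c K (Qp_divpow xi (N - Z.of_nat j)%Z)) n))
       eventually (locally (phi xi))) ->
  (forall xi : Qp p, phi xi <> RtoC 0 -> in_ball M xi) ->
  forall l : list Z, NoDup l ->
    (forall n, In n l ->
       (0 <= n)%Z /\ IZR n < powerRZ (INR p) (M + N) /\
       phi (Qp_of_frac p Hp0 n M) <> RtoC 0) ->
    INR (length l) <= INR d / INR (p - 1).
Proof.
  intros Hdeg H0 Hlim Hsupp l Hnd Hl.
  assert (Hp2 : (1 < p)%nat) by (pose proof (prime_ge_2 _ Hp); lia).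
  set (Q := fun z => ev (map c (seq 0 (S d))) z).
  set (fr := fun (X : nat) M' => Qp_of_frac p Hp0 (Z.of_nat X) M').
  assert (Hterm : forall X M' j,
    trig_poly c K (Qp_divpow (fr X M') (N - Z.of_nat j)) =
    Q (om p X (Z.to_nat (M' + N - Z.of_nat j)))).
  { intros X M' j. unfold Q. rewrite (trig_digits p _ X c K d Hp2 Hdeg).
    - f_equal. f_equal. simpl. lia.
    - intros i. simpl. rewrite Nat2Z.id. reflexivity. }
  assert (HQ1 : Q (RtoC 1) = RtoC 1).
  { transitivity (trig_poly c K (Qp_zero p Hp0)); [|exact H0]. symmetry.
    unfold Q. rewrite (trig_digits p _ 0 c K d Hp2 Hdeg).
    - replace (Z.to_nat (- qexp (Qp_zero p Hp0))) with 0%nat by reflexivity.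
      rewrite om_0 by lia. reflexivity.
    - intros i. simpl. rewrite Nat.Div0.div_0_l, Nat.Div0.mod_0_l. reflexivity. }
  set (L := (M + N)%Z).
  assert (HRel : forall X Y, (X mod p ^ Z.to_nat L = Y mod p ^ Z.to_nat L)%nat ->
    phi (fr X (M + 1)%Z) = Cmult (Q (om p X (Z.to_nat (L + 1)))) (phi (fr Y M))).
  { intros X Y HXY.
    apply (lim_unique (fun n => Cmult (RtoC Cst)
          (Cprod_lt (fun j => trig_poly c K (Qp_divpow (fr X (M + 1)%Z) (N - Z.of_nat j)%Z)) (S n)))).
    - apply (lim_shift (fun n => Cmult (RtoC Cst)
          (Cprod_lt (fun j => trig_poly c K (Qp_divpow (fr X (M + 1)%Z) (N - Z.of_nat j)%Z)) n))).
      apply Hlim.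
    - eapply filterlim_ext; [|apply lim_scal, (Hlim (fr Y M))].
      intros n. rewrite Cprod_shift.
      assert (E : Cprod_lt (fun j => trig_poly c K (Qp_divpow (fr X (M + 1)%Z) (N - Z.of_nat (S j)))) n
                = Cprod_lt (fun j => trig_poly c K (Qp_divpow (fr Y M) (N - Z.of_nat j)%Z)) n).
      { apply Cprod_ext. intros j. rewrite !Hterm. f_equal.
        replace (M + 1 + N - Z.of_nat (S j))%Z with (M + N - Z.of_nat j)%Z by lia.
        rewrite (om_mod p X), (om_mod p Y) by lia. f_equal.
        apply (modpow_le p X Y (Z.to_nat L)); auto. unfold L; lia. }
      rewrite E, Hterm.
      replace (M + 1 + N - Z.of_nat 0)%Z with (L + 1)%Z by (unfold L; lia). ring. }
  assert (HSh : forall X, phi (fr (p * X)%nat (M + 1)%Z) = phi (fr X M)).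
  { intros X. eapply lim_unique; [apply Hlim|].
    eapply filterlim_ext; [|apply (Hlim (fr X M))].
    intros n. cbv beta. f_equal. apply Cprod_ext. intros j. rewrite !Hterm. f_equal.
    destruct (Z_le_gt_dec 0 (M + N - Z.of_nat j)) as [Hj|Hj].
    - replace (Z.to_nat (M + 1 + N - Z.of_nat j)) with (S (Z.to_nat (M + N - Z.of_nat j))) by lia.
      symmetry; apply om_mul; lia.
    - replace (Z.to_nat (M + 1 + N - Z.of_nat j)) with 0%nat by lia.
      replace (Z.to_nat (M + N - Z.of_nat j)) with 0%nat by lia.
      rewrite !om_0 by lia. reflexivity. }
  assert (HSupp : forall X, (X mod p <> 0)%nat -> phi (fr X (M + 1)%Z) = RtoC 0).
  { intros X HX. destruct (Ceq_dec (phi (fr X (M + 1)%Z)) 0) as [e|e]; auto.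
    exfalso. specialize (Hsupp _ e 0%nat). unfold fr, Qp_of_frac in Hsupp; cbn [qdig qexp] in Hsupp.
    rewrite Nat2Z.id, Nat.pow_0_r, Nat.div_1_r in Hsupp. specialize (Hsupp HX). lia. }
  assert (HPpos : 0 < INR (p - 1)) by (apply lt_0_INR; lia).
  destruct (Z_lt_ge_dec L 0) as [HL|HL].
  -
    destruct l as [|n l'].
    + simpl. unfold Rdiv. apply Rmult_le_pos; [apply pos_INR|left; apply Rinv_0_lt_compat; lra].
    + exfalso. destruct (Hl n (or_introl eq_refl)) as [Hn0 [Hn1 Hn2]].
      assert (Hpow : powerRZ (INR p) (M + N) < 1).
      { fold L. replace L with (- Z.of_nat (Z.to_nat (- L)))%Z by lia.
        rewrite powerRZ_neg', <- pow_powerRZ.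
        assert (H1 : 1 < INR p ^ Z.to_nat (- L)).
        { apply Rlt_pow_R1; [apply (lt_INR 1); lia | lia]. }
        rewrite <- Rinv_1. apply Rinv_lt_contravar; lra. }
      assert (n = 0%Z) by (assert (IZR n < 1) by lra; apply lt_IZR in H; lia). subst n.
      apply Hn2.
      assert (E := HRel 1%nat 0%nat).
      rewrite (HSupp 1%nat) in E by (rewrite Nat.mod_small by lia; lia).
      replace (Z.to_nat (L + 1)) with 0%nat in E by lia.
      rewrite om_0, HQ1 in E by lia.
      change (Qp_of_frac p Hp0 0 M) with (fr 0%nat M).
      rewrite E; [ring|]. replace (Z.to_nat L) with 0%nat by lia. reflexivity.
  - set (E := Z.to_nat L). set (P := (p ^ E)%nat).
    assert (HP : (0 < P)%nat) by (unfold P; apply Nat.neq_0_lt_0, Nat.pow_nonzero; lia).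
    assert (HpowP : powerRZ (INR p) (M + N) = INR P).
    { fold L. replace L with (Z.of_nat E) by (unfold E; lia).
      rewrite <- pow_powerRZ. unfold P. rewrite pow_INR. reflexivity. }
    set (g := fun n : nat => if excluded_middle_informative (phi (fr n M) <> RtoC 0) then true else false).
    assert (Hg1 : forall n, g n = true -> phi (fr n M) <> RtoC 0).
    { intros n. unfold g. destruct excluded_middle_informative; auto; discriminate. }
    assert (Hg0 : forall n, g n = false -> phi (fr n M) = RtoC 0).
    { intros n. unfold g. destruct excluded_middle_informative as [h|h]; [discriminate|].
      intros _. destruct (Ceq_dec (phi (fr n M)) 0); auto. tauto. }
    assert (HA : (length l <= cnt g P)%nat).
    { rewrite <- cnt_filter, <- (length_map Z.to_nat l). apply NoDup_incl_length.
      - apply NoDup_map_in; auto. intros x y Hx Hy Hxy.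
        destruct (Hl x Hx) as [Hx0 _]. destruct (Hl y Hy) as [Hy0 _]. lia.
      - intros x Hx. apply in_map_iff in Hx as [n [Hxn Hn]]. subst x.
        destruct (Hl n Hn) as [Hn0 [Hn1 Hn2]].
        apply filter_In. split.
        + apply in_seq. rewrite HpowP, INR_IZR_INZ in Hn1. apply lt_IZR in Hn1. lia.
        + unfold g. destruct excluded_middle_informative as [h|h]; auto.
          exfalso. apply h. unfold fr. rewrite Z2Nat.id by lia. exact Hn2. }
    set (Bf := fun r => andb (Nat.eqb (r mod p) 0) (g (r / p)%nat)).
    set (Zf := fun r => andb (g (r mod P)%nat) (negb (Bf r))).
    assert (HZ : (cnt Zf (p * P) <= d)%nat).
    { rewrite <- cnt_filter.
      assert (Hb := root_bound (map (fun r => om p r (S E)) (filter Zf (seq 0 (p * P))))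
                      (map c (seq 0 (S d)))).
      rewrite !length_map, length_seq in Hb.
      assert (length (filter Zf (seq 0 (p * P))) < S d)%nat; [|lia].
      apply Hb.
      - apply NoDup_map_in; [|apply NoDup_filter, seq_NoDup].
        intros x y Hx Hy. apply filter_In in Hx as [Hx _]. apply filter_In in Hy as [Hy _].
        apply in_seq in Hx. apply in_seq in Hy.
        apply om_inj; [lia| |]; rewrite Nat.pow_succ_r'; fold P; lia.
      - rewrite seq_S, map_app. cbn [map]. rewrite last_last. destruct Hdeg as [_ [Hcd _]]. exact Hcd.
      - intros z Hz. apply in_map_iff in Hz as [r [Hzr Hr]]. subst z.
        apply filter_In in Hr as [_ Hr]. unfold Zf in Hr. apply andb_prop in Hr as [Hr1 Hr2].
        assert (Hrel := HRel r (r mod P)%nat).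
        rewrite Nat.Div0.mod_mod in Hrel. specialize (Hrel eq_refl).
        replace (Z.to_nat (L + 1)) with (S E) in Hrel by (unfold E; lia).
        assert (Hphi0 : phi (fr r (M + 1)%Z) = RtoC 0).
        { destruct (Nat.eq_dec (r mod p) 0) as [Hm|Hm].
          - unfold Bf in Hr2. rewrite Hm in Hr2. simpl in Hr2.
            destruct (g (r / p)%nat) eqn:Hgr; [discriminate|].
            apply Hg0 in Hgr. rewrite <- Hgr.
            apply Nat.Div0.div_exact in Hm. rewrite Hm at 1. apply HSh.
          - apply HSupp; auto. }
        rewrite Hphi0 in Hrel. apply Hg1 in Hr1.
        destruct (Ceq_dec (Q (om p r (S E))) 0) as [e|e]; [exact e|].
        exfalso. apply (Cmult_neq_0 _ _ e Hr1). symmetry. exact Hrel. }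
    assert (H1 : cnt (fun r => g (r mod P)%nat) (p * P) = (p * cnt g P)%nat) by (apply cnt_mod; auto).
    assert (H2 : cnt Bf (p * P) = cnt g P).
    { rewrite Nat.mul_comm. apply cnt_div. lia. }
    assert (H3 : (cnt (fun r => g (r mod P)%nat) (p * P) <= cnt Zf (p * P) + cnt Bf (p * P))%nat).
    { apply cnt_le3. intros i Hi. unfold Zf. rewrite Hi. simpl. destruct (Bf i); auto. }
    assert (HB : ((p - 1) * cnt g P <= d)%nat) by nia.
    apply Rle_div_r; [lra|].
    apply Rle_trans with (INR (cnt g P) * INR (p - 1)).
    + apply Rmult_le_compat_r; [lra|]. apply le_INR; auto.
    + rewrite <- mult_INR. apply le_INR. lia.
Qed.
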